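(* Let $\mathcal X,\mathcal Y$ be finite, $q:\mathcal X\times\mathcal Y\to\mathbb R$, $P_{X_1}$ a pmf on $\mathcal X$, and $W,V$ conditional pmfs on $\mathcal Y$ given $\mathcal X$. For conditional pmfs $P_{Y\hat Y|X_1}$ (on $\mathcal Y\times\mathcal Y$ given $\mathcal X$) and $P_{X_2|X_1\hat Y}$ (on $\mathcal X$ given $\mathcal X\times\mathcal Y$), let $\mathbb E[q(X_2,Y)]=\sum_{x_1,x_2,y,\hat y}q(x_2,y)P_{X_1}(x_1)P_{Y\hat Y|X_1}(y,\hat y|x_1)P_{X_2|X_1\hat Y}(x_2|\hat y,x_1)$. Let $\mathcal A$ be the set of $P_{Y\hat Y|X_1}$ with $P_{Y|X_1}=W$ and $P_{\hat Y|X_1}=V$, and $\mathcal B$ the set of $P_{X_2|X_1\hat Y}$ such that, under the joint law $P_{X_1}(x_1)V(\hat y|x_1)P_{X_2|X_1\hat Y}(x_2|\hat y,x_1)$, $P_{\hat YX_2}=P_{\hat YX_1}$. Then $$\max_{P_{Y\hat Y|X_1}\in\mathcal A}\ \min_{P_{X_2|X_1\hat Y}\in\mathcal B}\mathbb E[q(X_2,Y)]=\min_{P_{X_2|X_1\hat Y}\in\mathcal B}\ \max_{P_{Y\hat Y|X_1}\in\mathcal A}\mathbb E[q(X_2,Y)].$$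
   Context: $P_{Y|X_1}$ and $P_{\hat Y|X_1}$ denote the two marginal conditionals of $P_{Y\hat Y|X_1}$. The joint law of $(X_1,Y,\hat Y,X_2)$ is $P_{X_1}P_{Y\hat Y|X_1}P_{X_2|X_1\hat Y}$, so that $X_2-(X_1,\hat Y)-Y$ is a Markov chain. *)

(* Defs.v *)
From HB Require Import structures.
From mathcomp Require Import all_boot all_order all_algebra.
From mathcomp Require Import all_classical all_reals.
Set Implicit Arguments. Unset Strict Implicit. Unset Printing Implicit Defensive.
Import Order.TTheory GRing.Theory Num.Theory.
Local Open Scope ring_scope.
Local Open Scope classical_set_scope.

Section Defs.
Variables (R : realType) (X Y : finType).

Definition is_pmf (P : X -> R) : Prop :=
  (forall x, 0 <= P x) /\ \sum_(x : X) P x = 1.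

(* conditional pmf on Y given X : W x1 y = W(y|x1) *)
Definition is_cond_pmf (W : X -> Y -> R) : Prop :=
  forall x, (forall y, 0 <= W x y) /\ \sum_(y : Y) W x y = 1.

(* P_{Y Yhat | X1} : P x1 y yh = P(y, yh | x1) *)
Definition is_cond_pmf2 (P : X -> Y -> Y -> R) : Prop :=
  forall x, (forall y yh, 0 <= P x y yh) /\ \sum_(y : Y) \sum_(yh : Y) P x y yh = 1.

(* P_{X2 | X1 Yhat} : K x1 yh x2 = P(x2 | yh, x1) *)
Definition is_cond_pmfX (K : X -> Y -> X -> R) : Prop :=
  forall x1 yh, (forall x2, 0 <= K x1 yh x2) /\ \sum_(x2 : X) K x1 yh x2 = 1.

Definition expect_q (q : X -> Y -> R) (PX1 : X -> R)
  (P : X -> Y -> Y -> R) (K : X -> Y -> X -> R) : R :=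
  \sum_(x1 : X) \sum_(x2 : X) \sum_(y : Y) \sum_(yh : Y)
     q x2 y * PX1 x1 * P x1 y yh * K x1 yh x2.

Definition setA (W V : X -> Y -> R) : set (X -> Y -> Y -> R) :=
  [set P | is_cond_pmf2 P /\
     (forall x1 y, \sum_(yh : Y) P x1 y yh = W x1 y) /\
     (forall x1 yh, \sum_(y : Y) P x1 y yh = V x1 yh)].

Definition setB (PX1 : X -> R) (V : X -> Y -> R) : set (X -> Y -> X -> R) :=
  [set K | is_cond_pmfX K /\
     (forall yh x, \sum_(x1 : X) PX1 x1 * V x1 yh * K x1 yh x = PX1 x * V x yh)].

End Defs.

(* Main.v *)
Require Import Defs.
From HB Require Import structures.
From mathcomp Require Import all_boot all_order all_algebra.
From mathcomp Require Import all_classical all_reals.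
From mathcomp Require Import ring lra.
Set Implicit Arguments. Unset Strict Implicit. Unset Printing Implicit Defensive.
Import Order.TTheory GRing.Theory Num.Theory.
Local Open Scope ring_scope.

Section Aux.
Variable R : realFieldType.

Lemma sum_delta (I : finType) (i : I) (f : I -> R) :
  \sum_k (k == i)%:R * f k = f i.
Proof.
rewrite (bigD1 i) //= eqxx mul1r big1 ?addr0 // => k /negbTE ->.
by rewrite mul0r.
Qed.

Lemma sep_seq (ls us : seq R) :
  (forall l u, l \in ls -> u \in us -> l <= u) ->
  exists z, (forall l, l \in ls -> l <= z) /\ (forall u, u \in us -> z <= u).
Proof.
elim: ls => [|l ls IH] H.
  elim: us {H} => [|u us [z [_ Hz]]]; first by exists 0.
  exists (Num.min u z); split => // v; rewrite inE => /orP [/eqP ->|Hv].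
    by rewrite ge_min lexx.
  by rewrite ge_min Hz ?orbT.
have [z [Hl Hu]] : exists z, (forall l, l \in ls -> l <= z) /\ (forall u, u \in us -> z <= u).
  by apply: IH => l' u Hl' Hu'; apply: H => //; rewrite inE Hl' orbT.
exists (Num.max l z); split.
  move=> v; rewrite inE => /orP [/eqP ->|Hv]; first by rewrite le_max lexx.
  by rewrite le_max Hl ?orbT.
move=> u Hu'; rewrite ge_max Hu // andbT; apply: H => //; exact: mem_head.
Qed.

Lemma sep_fin (I : finType) (PL PU : pred I) (L U : I -> R) :
  (forall m p, PL m -> PU p -> L m <= U p) ->
  exists z, (forall m, PL m -> L m <= z) /\ (forall p, PU p -> z <= U p).
Proof.
move=> H.
have [z [H1 H2]] : exists z, (forall l, l \in [seq L m | m <- enum PL] -> l <= z) /\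
   (forall u, u \in [seq U p | p <- enum PU] -> z <= u).
  apply: sep_seq => l u /mapP [m Hm ->] /mapP [p Hp ->].
  by apply: H; [move: Hm | move: Hp]; rewrite mem_enum.
exists z; split.
  by move=> m Hm; apply: H1; apply: map_f; rewrite mem_enum.
by move=> p Hp; apply: H2; apply: map_f; rewrite mem_enum.
Qed.

End Aux.

Section Farkas.
Variables (R : realFieldType) (T : finType).

Definition dotv (a x : T -> R) := \sum_t a t * x t.

Definition upd (x : T -> R) (j : T) (z : R) := fun t => if t == j then z else x t.

Lemma dot_upd a x j z : dotv a (upd x j z) = dotv a (upd x j 0) + a j * z.
Proof.
rewrite /dotv (bigD1 j) //= [in RHS](bigD1 j) //= /upd eqxx mulr0 add0r addrC.
congr (_ + _); apply: eq_bigr => t /negbTE -> //.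
Qed.

Lemma dot_lin (I : finType) (c : I -> R) (a : I -> T -> R) x :
  dotv (fun t => \sum_k c k * a k t) x = \sum_k c k * dotv (a k) x.
Proof.
rewrite /dotv; under eq_bigr do rewrite mulr_suml.
rewrite exchange_big /=; apply: eq_bigr => k _.
rewrite big_distrr /=; apply: eq_bigr => t _; by rewrite mulrA.
Qed.


Lemma upd_id a x j : dotv a (upd x j (x j)) = dotv a x.
Proof. by apply: eq_bigr => t _; rewrite /upd; case: eqP => // ->. Qed.

Definition feas (I : finType) (a : I -> T -> R) (b : I -> R) :=
  exists x, forall i, dotv (a i) x <= b i.
Definition certif (I : finType) (a : I -> T -> R) (b : I -> R) :=
  exists y : I -> R, (forall i, 0 <= y i) /\
    (forall t, \sum_i y i * a i t = 0) /\ \sum_i y i * b i < 0.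

Lemma farkas0 (I : finType) (a : I -> T -> R) (b : I -> R) :
  (forall i t, a i t = 0) -> feas a b \/ certif a b.
Proof.
move=> Ha; case: (boolP [exists i, b i < 0]).
  move/existsP => [i0 Hi0]; right; exists (fun i => (i == i0)%:R).
  split; first by move=> i; rewrite ler0n.
  split; last by rewrite sum_delta.
  by move=> t; rewrite big1 // => i _; rewrite Ha mulr0.
rewrite negb_exists => /forallP H; left; exists (fun _ => 0) => i.
rewrite /dotv big1 ?Ha; first by rewrite leNgt H.
by move=> t _; rewrite mulr0.
Qed.

Definition fm_coef (I : finType) (a : I -> T -> R) (j : T) (i' : I + I * I) (k : I) : R :=
  match i' with
  | inl i => if a i j == 0 then (k == i)%:R else 0
  | inr (p, m) => if (0 < a p j) && (a m j < 0) then
                    - a m j * (k == p)%:R + a p j * (k == m)%:R else 0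
  end.

Lemma fm_coef_ge0 (I : finType) (a : I -> T -> R) j i' k : 0 <= fm_coef a j i' k.
Proof.
case: i' => [i|[p m]] /=; case: ifP => //; rewrite ?ler0n //.
move=> /andP [Hp Hm].
by apply: addr_ge0; apply: mulr_ge0; rewrite ?ler0n // ?oppr_ge0 ltW.
Qed.

Lemma comb_sum (I J : finType) (y : J -> R) (c : J -> I -> R) (f : I -> R) :
  \sum_k (\sum_i y i * c i k) * f k = \sum_i y i * \sum_k c i k * f k.
Proof.
under eq_bigr do rewrite mulr_suml.
rewrite exchange_big /=; apply: eq_bigr => i _.
rewrite big_distrr /=; apply: eq_bigr => k _; by rewrite mulrA.
Qed.

Lemma fm_inl (I : finType) (a : I -> T -> R) j i (f : I -> R) :
  a i j = 0 -> \sum_k fm_coef a j (inl i) k * f k = f i.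
Proof. by move=> H /=; rewrite H eqxx sum_delta. Qed.

Lemma fm_inr (I : finType) (a : I -> T -> R) j p m (f : I -> R) :
  0 < a p j -> a m j < 0 ->
  \sum_k fm_coef a j (inr (p, m)) k * f k = - a m j * f p + a p j * f m.
Proof.
move=> Hp Hm /=; rewrite Hp Hm /=.
under eq_bigr do rewrite mulrDl -!mulrA.
by rewrite big_split /= -!big_distrr /= !sum_delta.
Qed.

Lemma fm_j (I : finType) (a : I -> T -> R) j i' :
  \sum_k fm_coef a j i' k * a k j = 0.
Proof.
case: i' => [i|[p m]].
  case: (eqVneq (a i j) 0) => H; first by rewrite fm_inl.
  by rewrite big1 // => k _ /=; rewrite (negbTE H) mul0r.
case: (boolP ((0 < a p j) && (a m j < 0))) => [/andP [Hp Hm]|H].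
  by rewrite fm_inr //; ring.
by rewrite big1 // => k _ /=; rewrite (negbTE H) mul0r.
Qed.

Lemma farkas_n n : forall (S : {set T}) (I : finType) (a : I -> T -> R) (b : I -> R),
  (#|S| <= n)%N -> (forall i t, t \notin S -> a i t = 0) -> feas a b \/ certif a b.
Proof.
elim: n => [|n IH] S I a b HS Ha.
  apply: farkas0 => i t; apply: Ha.
  by move: HS; rewrite leqn0 cards_eq0 => /eqP ->; rewrite finset.in_set0.
case: (set_0Vmem S) => [HS0|[j Hj]].
  by apply: farkas0 => i t; apply: Ha; rewrite HS0 finset.in_set0.
have HS' : (#|S :\ j| <= n)%N by move: HS; rewrite (cardsD1 j S) Hj.
pose a' := fun i' t => \sum_k fm_coef a j i' k * a k t.
pose b' := fun i' => \sum_k fm_coef a j i' k * b k.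
have Ha' : forall i' t, t \notin S :\ j -> a' i' t = 0.
  move=> i' t; rewrite finset.in_setD1 negb_and negbK => /orP [/eqP ->|Ht].
    exact: fm_j.
  by rewrite /a' big1 // => k _; rewrite Ha // mulr0.
case: (IH (S :\ j) _ a' b' HS' Ha') => [[x' Hx']|[y' [Hy1 [Hy2 Hy3]]]]; last first.
  right; exists (fun k => \sum_i y' i * fm_coef a j i k); split.
    by move=> k; apply: sumr_ge0 => i _; apply: mulr_ge0 => //; exact: fm_coef_ge0.
  split; first by move=> t; rewrite comb_sum; exact: Hy2.
  by rewrite comb_sum.
pose x0 := upd x' j 0.
pose r := fun i => dotv (a i) x0.
have Hx0 : forall i', \sum_k fm_coef a j i' k * r k <= b' i'.
  move=> i'; rewrite -dot_lin -/(a' i'); have := dot_upd (a' i') x' j (x' j).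
  by rewrite upd_id /a' fm_j mul0r addr0 -/(a' i') => <-; exact: Hx'.
have Hsep : forall m p, a m j < 0 -> 0 < a p j ->
    (b m - r m) / a m j <= (b p - r p) / a p j.
  move=> m p /= Hm Hp.
  have := Hx0 (inr (p, m)); rewrite fm_inr // /b' fm_inr // => H.
  have Hm0 : a m j != 0 by rewrite lt_eqF.
  set u := (b m - r m) / a m j.
  have Hu : u * a m j = b m - r m by rewrite /u divfK.
  rewrite ler_pdivlMr //; nra.
have [z [Hz1 Hz2]] := @sep_fin R I (fun m => a m j < 0) (fun p => 0 < a p j)
   (fun m => (b m - r m) / a m j) (fun p => (b p - r p) / a p j) Hsep.
left; exists (upd x' j z) => i; rewrite dot_upd -/x0 -/(r i).
case: (ltgtP (a i j) 0) => Hij.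
- have := Hz1 i Hij; rewrite /= ler_ndivrMr // => H; lra.
- have := Hz2 i Hij; rewrite /= ler_pdivlMr // => H; lra.
- have := Hx0 (inl i); rewrite fm_inl // /b' fm_inl // Hij mul0r addr0 //.
Qed.

Lemma farkas (I : finType) (a : I -> T -> R) (b : I -> R) : feas a b \/ certif a b.
Proof. by apply: (@farkas_n #|T| [set: T]%SET) => //; [exact: max_card | move=> i t; rewrite finset.in_setT]. Qed.

End Farkas.

Section Saddle.
Variables (R : realFieldType) (TP TK IC ID : finType).
Variables (C : IC -> TP -> R) (c : IC -> R) (D : ID -> TK -> R) (d : ID -> R).
Variable (M : TP -> TK -> R).

Definition inA (P : TP -> R) := (forall t, 0 <= P t) /\ (forall i, \sum_t C i t * P t = c i).
Definition inB (K : TK -> R) := (forall k, 0 <= K k) /\ (forall j, \sum_k D j k * K k = d j).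
Definition Eg (P : TP -> R) (K : TK -> R) := \sum_t P t * \sum_k M t k * K k.

Local Notation V := (TP + TK + IC + ID)%type.
Definition vP t : V := inl (inl (inl t)).
Definition vK k : V := inl (inl (inr k)).
Definition vU i : V := inl (inr i).
Definition vW j : V := inr j.

Lemma sumV (f : V -> R) : \sum_v f v =
  \sum_t f (vP t) + \sum_k f (vK k) + \sum_i f (vU i) + \sum_j f (vW j).
Proof. by rewrite !big_sumType. Qed.

Definition mkrow (fP : TP -> R) (fK : TK -> R) (fU : IC -> R) (fW : ID -> R) (v : V) : R :=
  match v with
  | inl (inl (inl t)) => fP t
  | inl (inl (inr k)) => fK k
  | inl (inr i) => fU i
  | inr j => fW j
  end.

Lemma dot_mkrow fP fK fU fW x : dotv (mkrow fP fK fU fW) x =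
  \sum_t fP t * x (vP t) + \sum_k fK k * x (vK k) + \sum_i fU i * x (vU i)
  + \sum_j fW j * x (vW j).
Proof. by rewrite /dotv sumV. Qed.

Local Notation Iset := (TP + TK + IC + IC + ID + ID + TP + TK + unit)%type.

Definition arow (r : Iset) : V -> R :=
  match r with
  | inl (inl (inl (inl (inl (inl (inl (inl t))))))) =>
      mkrow (fun t' => - (t' == t)%:R) (fun _ => 0) (fun _ => 0) (fun _ => 0)
  | inl (inl (inl (inl (inl (inl (inl (inr k))))))) =>
      mkrow (fun _ => 0) (fun k' => - (k' == k)%:R) (fun _ => 0) (fun _ => 0)
  | inl (inl (inl (inl (inl (inl (inr i)))))) =>
      mkrow (C i) (fun _ => 0) (fun _ => 0) (fun _ => 0)
  | inl (inl (inl (inl (inl (inr i))))) =>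
      mkrow (fun t => - C i t) (fun _ => 0) (fun _ => 0) (fun _ => 0)
  | inl (inl (inl (inl (inr j)))) =>
      mkrow (fun _ => 0) (D j) (fun _ => 0) (fun _ => 0)
  | inl (inl (inl (inr j))) =>
      mkrow (fun _ => 0) (fun k => - D j k) (fun _ => 0) (fun _ => 0)
  | inl (inl (inr t)) =>
      mkrow (fun _ => 0) (M t) (fun i => - C i t) (fun _ => 0)
  | inl (inr k) =>
      mkrow (fun t => - M t k) (fun _ => 0) (fun _ => 0) (fun j => D j k)
  | inr _ =>
      mkrow (fun _ => 0) (fun _ => 0) c (fun j => - d j)
  end.

Definition brow (r : Iset) : R :=
  match r with
  | inl (inl (inl (inl (inl (inl (inr i)))))) => c i
  | inl (inl (inl (inl (inl (inr i))))) => - c i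
  | inl (inl (inl (inl (inr j)))) => d j
  | inl (inl (inl (inr j))) => - d j
  | _ => 0
  end.

Definition r1 t : Iset := inl (inl (inl (inl (inl (inl (inl (inl t))))))).
Definition r2 k : Iset := inl (inl (inl (inl (inl (inl (inl (inr k))))))).
Definition r3 i : Iset := inl (inl (inl (inl (inl (inl (inr i)))))).
Definition r4 i : Iset := inl (inl (inl (inl (inl (inr i))))).
Definition r5 j : Iset := inl (inl (inl (inl (inr j)))).
Definition r6 j : Iset := inl (inl (inl (inr j))).
Definition r7 t : Iset := inl (inl (inr t)).
Definition r8 k : Iset := inl (inr k).
Definition r9 : Iset := inr tt.

Lemma sum_unit (f : unit -> R) : \sum_u f u = f tt.
Proof. by rewrite (bigD1 tt) //= big1 ?addr0 // => [[]]; rewrite eqxx. Qed.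

Lemma sumI (f : Iset -> R) : \sum_r f r =
  \sum_t f (r1 t) + \sum_k f (r2 k) + \sum_i f (r3 i) + \sum_i f (r4 i)
  + \sum_j f (r5 j) + \sum_j f (r6 j) + \sum_t f (r7 t) + \sum_k f (r8 k) + f r9.
Proof. by rewrite !big_sumType sum_unit. Qed.


Lemma sum_mul0 (I : finType) (f : I -> R) : \sum_i f i * 0 = 0.
Proof. by rewrite big1 // => i _; rewrite mulr0. Qed.
Lemma sum_0mul (I : finType) (f : I -> R) : \sum_i 0 * f i = 0.
Proof. by rewrite big1 // => i _; rewrite mul0r. Qed.
Lemma sum_delta_r (I : finType) (i : I) (f : I -> R) : \sum_k f k * (i == k)%:R = f i.
Proof. by rewrite -[RHS](sum_delta i f); apply: eq_bigr => k _; rewrite mulrC eq_sym. Qed.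
Lemma sum_Ndelta (I : finType) (i : I) (f : I -> R) : \sum_k - (k == i)%:R * f k = - f i.
Proof. by rewrite -sum_delta -sumrN; apply: eq_bigr => k _; rewrite mulNr. Qed.
Lemma sum_Ndelta_r (I : finType) (i : I) (f : I -> R) : \sum_k f k * - (i == k)%:R = - f i.
Proof. by rewrite -(sum_delta_r i f) -sumrN; apply: eq_bigr => k _; rewrite mulrN. Qed.
Lemma sum_mulN (I : finType) (f g : I -> R) : \sum_k f k * - g k = - \sum_k f k * g k.
Proof. by rewrite -sumrN; apply: eq_bigr => k _; rewrite mulrN. Qed.
Lemma sum_Nmul (I : finType) (f g : I -> R) : \sum_k - f k * g k = - \sum_k f k * g k.
Proof. by rewrite -sumrN; apply: eq_bigr => k _; rewrite mulNr. Qed.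

Lemma bil_swap (I J : finType) (f : I -> R) (g : I -> J -> R) (h : J -> R) :
  \sum_i f i * \sum_j g i j * h j = \sum_j h j * \sum_i g i j * f i.
Proof.
under eq_bigr do rewrite big_distrr.
rewrite exchange_big; apply: eq_bigr => j _; rewrite big_distrr.
by apply: eq_bigr => i _ /=; ring.
Qed.

Lemma dsw (I J : finType) (a : I -> R) (b : J -> R) (F : I -> J -> R) :
  \sum_i a i * \sum_j b j * F i j = \sum_j b j * \sum_i a i * F i j.
Proof.
under eq_bigr do rewrite big_distrr.
rewrite exchange_big; apply: eq_bigr => j _; rewrite big_distrr.
by apply: eq_bigr => i _ /=; ring.
Qed.

Hypotheses (A0 : exists P, inA P) (B0 : exists K, inB K).
Hypothesis bndA : forall la : TP -> R, (forall t, 0 <= la t) ->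
  (forall i, \sum_t C i t * la t = 0) -> forall t, la t = 0.
Hypothesis bndB : forall rh : TK -> R, (forall k, 0 <= rh k) ->
  (forall j, \sum_k D j k * rh k = 0) -> forall k, rh k = 0.

Theorem saddle : exists2 P, inA P & exists2 K, inB K &
  forall P' K', inA P' -> inB K' -> Eg P' K <= Eg P K'.
Proof.
case: (farkas arow brow) => [[x Hx]|[y [Hy0 [Hyv Hyb]]]].
  have H1 t : 0 <= x (vP t).
    by have := Hx (r1 t); rewrite dot_mkrow /= !sum_0mul !addr0 sum_Ndelta oppr_le0.
  have H2 k : 0 <= x (vK k).
    by have := Hx (r2 k); rewrite dot_mkrow /= !sum_0mul !addr0 add0r sum_Ndelta oppr_le0.
  have H3 i : \sum_t C i t * x (vP t) = c i.
    apply: le_anti; apply/andP; split.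
      by have := Hx (r3 i); rewrite dot_mkrow /= !sum_0mul !addr0.
    by have := Hx (r4 i); rewrite dot_mkrow /= !sum_0mul !addr0 sum_Nmul lerN2.
  have H5 j : \sum_k D j k * x (vK k) = d j.
    apply: le_anti; apply/andP; split.
      by have := Hx (r5 j); rewrite dot_mkrow /= !sum_0mul !addr0 add0r.
    by have := Hx (r6 j); rewrite dot_mkrow /= !sum_0mul !addr0 add0r sum_Nmul lerN2.
  have H7 t : \sum_k M t k * x (vK k) <= \sum_i C i t * x (vU i).
    have := Hx (r7 t); rewrite dot_mkrow /= !sum_0mul !addr0 add0r sum_Nmul.
    by rewrite subr_le0.
  have H8 k : \sum_j D j k * x (vW j) <= \sum_t M t k * x (vP t).
    have := Hx (r8 k); rewrite dot_mkrow /= !sum_0mul !addr0 sum_Nmul addrC.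
    by rewrite subr_le0.
  have H9 : \sum_i c i * x (vU i) <= \sum_j d j * x (vW j).
    have := Hx r9; rewrite dot_mkrow /= !sum_0mul !add0r sum_Nmul.
    by rewrite subr_le0.
  exists (fun t => x (vP t)); first by split.
  exists (fun k => x (vK k)); first by split.
  move=> P' K' [HP'0 HP'] [HK'0 HK'].
  apply: (@le_trans _ _ (\sum_t P' t * \sum_i C i t * x (vU i))).
    by apply: ler_sum => t _; apply: ler_wpM2l.
  rewrite bil_swap.
  under eq_bigr do rewrite HP'.
  apply: (@le_trans _ _ (\sum_j d j * x (vW j))).
    by apply: (le_trans _ H9); rewrite le_eqVlt; apply/orP; left; apply/eqP;
      apply: eq_bigr => i _; rewrite mulrC.
  under eq_bigr do rewrite -HK'.
  under eq_bigr do rewrite mulrC.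
  rewrite /Eg (bil_swap (fun j => x (vW j))) (bil_swap (fun t => x (vP t))).
  apply: ler_sum => k _; apply: ler_wpM2l => //.
have EqP t0 : - y (r1 t0) + \sum_i (y (r3 i) - y (r4 i)) * C i t0
    - \sum_k y (r8 k) * M t0 k = 0.
  have := Hyv (vP t0); rewrite sumI /= !sum_mul0 !addr0 sum_Ndelta_r !sum_mulN mulr0 addr0 => H.
  under eq_bigr do rewrite mulrBl.
  by rewrite sumrB; apply: etrans _ H; ring.
have EqK k0 : - y (r2 k0) + \sum_j (y (r5 j) - y (r6 j)) * D j k0
    + \sum_t y (r7 t) * M t k0 = 0.
  have := Hyv (vK k0); rewrite sumI /= !sum_mul0 !addr0 !add0r sum_Ndelta_r !sum_mulN mulr0 addr0 => H.
  under eq_bigr do rewrite mulrBl.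
  by rewrite sumrB; apply: etrans _ H; ring.
have EqU i0 : \sum_t y (r7 t) * C i0 t = y r9 * c i0.
  have := Hyv (vU i0); rewrite sumI /= !sum_mul0 !addr0 !add0r !sum_mulN.
  move=> H; lra.
have EqW j0 : \sum_k y (r8 k) * D j0 k = y r9 * d j0.
  have := Hyv (vW j0); rewrite sumI /= !sum_mul0 !addr0 !add0r mulrN.
  move=> H; lra.
have Neg : \sum_i (y (r3 i) - y (r4 i)) * c i + \sum_j (y (r5 j) - y (r6 j)) * d j < 0.
  move: Hyb; rewrite sumI /= !sum_mul0 !addr0 !add0r !sum_mulN mulr0 addr0 => H.
  under eq_bigr do rewrite mulrBl.
  under [X in _ + X]eq_bigr do rewrite mulrBl.
  rewrite !sumrB; apply: le_lt_trans H; rewrite le_eqVlt; apply/orP; left; apply/eqP; ring.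
exfalso.
set mu := y r9.
pose g i := y (r3 i) - y (r4 i).
pose de j := y (r5 j) - y (r6 j).
pose Q := \sum_t y (r7 t) * \sum_k y (r8 k) * M t k.
have S1 : \sum_t y (r7 t) * y (r1 t) = mu * (\sum_i g i * c i) - Q.
  transitivity (\sum_t y (r7 t) * (\sum_i g i * C i t - \sum_k y (r8 k) * M t k)).
    by apply: eq_bigr => t _; congr (_ * _); have := EqP t; rewrite -/g; lra.
  under eq_bigr do rewrite mulrBr.
  rewrite sumrB dsw -/Q; congr (_ - _).
  rewrite big_distrr; apply: eq_bigr => i _ /=; rewrite EqU /mu; ring.
have S2 : \sum_k y (r8 k) * y (r2 k) = mu * (\sum_j de j * d j) + Q.
  transitivity (\sum_k y (r8 k) * (\sum_j de j * D j k + \sum_t y (r7 t) * M t k)).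
    by apply: eq_bigr => k _; congr (_ * _); have := EqK k; rewrite -/de; lra.
  under eq_bigr do rewrite mulrDr.
  rewrite big_split /= dsw [X in _ + X]dsw -/Q; congr (_ + _).
  rewrite big_distrr; apply: eq_bigr => j _ /=; rewrite EqW /mu; ring.
have G1 : 0 <= \sum_t y (r7 t) * y (r1 t) by apply: sumr_ge0 => t _; apply: mulr_ge0.
have G2 : 0 <= \sum_k y (r8 k) * y (r2 k) by apply: sumr_ge0 => t _; apply: mulr_ge0.
have Hmu0 : 0 <= mu by exact: Hy0.
have Hmu : mu = 0 by nra.
have La t : y (r7 t) = 0.
  apply: (bndA (la := fun t => y (r7 t))) => // i.
  rewrite (eq_bigr (fun t => y (r7 t) * C i t)) ; last by move=> t1 _; rewrite mulrC.
  by rewrite EqU -/mu Hmu mul0r.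
have Rh k : y (r8 k) = 0.
  apply: (bndB (rh := fun k => y (r8 k))) => // j.
  rewrite (eq_bigr (fun k => y (r8 k) * D j k)) ; last by move=> k1 _; rewrite mulrC.
  by rewrite EqW -/mu Hmu mul0r.
have [P0 [HP00 HP0]] := A0.
have [K0 [HK00 HK0]] := B0.
have T1 : 0 <= \sum_i g i * c i.
  have -> : \sum_i g i * c i = \sum_t P0 t * y (r1 t).
    transitivity (\sum_t P0 t * \sum_i g i * C i t); last first.
      apply: eq_bigr => t _; congr (_ * _); have := EqP t; rewrite -/g.
      have Z : \sum_k y (r8 k) * M t k = 0 by rewrite big1 // => k _; rewrite Rh mul0r.
      rewrite Z; lra.
    rewrite dsw; apply: eq_bigr => i _; rewrite -HP0; congr (_ * _).
    by apply: eq_bigr => t _; rewrite mulrC.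
  by apply: sumr_ge0 => t _; apply: mulr_ge0.
have T2 : 0 <= \sum_j de j * d j.
  have -> : \sum_j de j * d j = \sum_k K0 k * y (r2 k).
    transitivity (\sum_k K0 k * \sum_j de j * D j k); last first.
      apply: eq_bigr => k _; congr (_ * _); have := EqK k; rewrite -/de.
      have Z : \sum_t y (r7 t) * M t k = 0 by rewrite big1 // => t _; rewrite La mul0r.
      rewrite Z; lra.
    rewrite dsw; apply: eq_bigr => j _; rewrite -HK0; congr (_ * _).
    by apply: eq_bigr => k _; rewrite mulrC.
  by apply: sumr_ge0 => k _; apply: mulr_ge0.
rewrite -/g -/de in Neg; lra.
Qed.

End Saddle.

Section Attain.
Variables (R : realFieldType) (TP TK IC ID : finType).
Variables (C : IC -> TP -> R) (c : IC -> R) (D : ID -> TK -> R) (d : ID -> R).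
Variable (M : TP -> TK -> R).

Lemma unit_inA (p : unit -> R) :
  inA (fun (_ : unit) (_ : unit) => 1) (fun _ => 1) p -> p tt = 1.
Proof. by move=> [_ H]; have := H tt; rewrite sum_unit mul1r. Qed.

Lemma unit_bnd (la : unit -> R) : (forall t, 0 <= la t) ->
  (forall i : unit, \sum_t (fun _ _ => 1) i t * la t = 0) -> forall t, la t = 0.
Proof. by move=> _ H [] ; have := H tt; rewrite sum_unit mul1r. Qed.

Lemma unit_A0 : exists p, inA (fun (_ : unit) (_ : unit) => 1 : R) (fun _ => 1) p.
Proof. by exists (fun _ => 1); split => // i; rewrite sum_unit mul1r. Qed.

Lemma EgE (P : TP -> R) (K : TK -> R) :
  Eg M P K = \sum_k (\sum_t P t * M t k) * K k.
Proof.
rewrite /Eg; under eq_bigr do rewrite big_distrr.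
under [RHS]eq_bigr do rewrite mulr_suml.
rewrite exchange_big; apply: eq_bigr => k _; apply: eq_bigr => t _ /=; ring.
Qed.

Lemma attain_min : (exists K, inB D d K) ->
  (forall rh : TK -> R, (forall k, 0 <= rh k) ->
     (forall j, \sum_k D j k * rh k = 0) -> forall k, rh k = 0) ->
  forall P, exists2 K, inB D d K & forall K', inB D d K' -> Eg M P K <= Eg M P K'.
Proof.
move=> B0 bndB P.
have [p Hp [K HK H]] := @saddle R unit TK unit ID (fun _ _ => 1) (fun _ => 1) D d
   (fun _ k => \sum_t P t * M t k) unit_A0 B0 (@unit_bnd) bndB.
exists K => // K' HK'; have := H p K' Hp HK'.
by rewrite /Eg !sum_unit (unit_inA Hp) !mul1r -!EgE.
Qed.

Lemma attain_max : (exists P, inA C c P) ->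
  (forall la : TP -> R, (forall t, 0 <= la t) ->
     (forall i, \sum_t C i t * la t = 0) -> forall t, la t = 0) ->
  forall K, exists2 P, inA C c P & forall P', inA C c P' -> Eg M P' K <= Eg M P K.
Proof.
move=> A0 bndA K.
have [P HP [k Hk H]] := @saddle R TP unit IC unit C c (fun _ _ => 1) (fun _ => 1)
   (fun t _ => \sum_k M t k * K k) A0 unit_A0 bndA (@unit_bnd).
exists P => // P' HP'; have := H P' k HP' Hk.
have Hk1 := unit_inA Hk.
rewrite /Eg; under eq_bigr do rewrite sum_unit Hk1 mulr1.
by under [X in _ <= X -> _]eq_bigr do rewrite sum_unit Hk1 mulr1.
Qed.

End Attain.

Local Open Scope classical_set_scope.

Section Abs.
Variable R : realType.

Lemma sup_max (S : set R) m : S m -> (forall s, S s -> s <= m) -> sup S = m.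
Proof.
move=> Sm ub; apply: le_anti; apply/andP; split.
  by apply: ge_sup; [exists m | exact: ub].
by apply: ub_le_sup => //; exists m.
Qed.

Lemma inf_min (S : set R) m : S m -> (forall s, S s -> m <= s) -> inf S = m.
Proof.
move=> Sm lb; apply: le_anti; apply/andP; split.
  by apply: ge_inf => //; exists m.
by apply: lb_le_inf; [exists m | exact: lb].
Qed.

Lemma abs_minimax (TA TB : Type) (E : TA -> TB -> R) (A : set TA) (B : set TB) :
  (exists2 Ps, A Ps & exists2 Ks, B Ks & forall P K, A P -> B K -> E P Ks <= E Ps K) ->
  (forall P, A P -> exists2 K, B K & forall K', B K' -> E P K <= E P K') ->
  (forall K, B K -> exists2 P, A P & forall P', A P' -> E P' K <= E P K) ->
  let minB := fun P => inf [set E P K | K in B] in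
  let maxA := fun K => sup [set E P K | P in A] in
  (forall P, A P -> exists2 K, B K & forall K', B K' -> E P K <= E P K') /\
  (forall K, B K -> exists2 P, A P & forall P', A P' -> E P' K <= E P K) /\
  (exists2 P, A P & forall P', A P' -> minB P' <= minB P) /\
  (exists2 K, B K & forall K', B K' -> maxA K <= maxA K') /\
  sup [set minB P | P in A] = inf [set maxA K | K in B].
Proof.
move=> [Ps HPs [Ks HKs SAD]] MIN MAX minB maxA.
have minBE P K : A P -> B K -> (forall K', B K' -> E P K <= E P K') -> minB P = E P K.
  move=> HP HK Hm; apply: inf_min; first by exists K.
  by move=> s [K' HK' <-]; exact: Hm.
have maxAE P K : A P -> B K -> (forall P', A P' -> E P' K <= E P K) -> maxA K = E P K.
  move=> HP HK Hm; apply: sup_max; first by exists P.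
  by move=> s [P' HP' <-]; exact: Hm.
have v1 : minB Ps = E Ps Ks.
  by apply: minBE => // K' HK'; apply: SAD.
have v2 : maxA Ks = E Ps Ks.
  by apply: maxAE => // P' HP'; apply: SAD.
have le1 P : A P -> minB P <= E Ps Ks.
  move=> HP; have [K HK Hm] := MIN P HP; rewrite (minBE P K) //.
  by apply: le_trans (Hm Ks HKs) _; apply: SAD.
have le2 K : B K -> E Ps Ks <= maxA K.
  move=> HK; have [P HP Hm] := MAX K HK; rewrite (maxAE P K) //.
  by apply: le_trans (Hm Ps HPs); apply: SAD.
split => //; split => //; split.
  by exists Ps => // P' HP'; rewrite v1; exact: le1.
split.
  by exists Ks => // K' HK'; rewrite v2; exact: le2.
rewrite (@sup_max _ (E Ps Ks)); last first.
- by move=> s [P HP <-]; exact: le1.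
- by exists Ps.
rewrite (@inf_min _ (E Ps Ks)) //; last first.
- by move=> s [K HK <-]; exact: le2.
- by exists Ks.
Qed.

End Abs.

Section Concrete.
Variables (R : realType) (X Y : finType).

Lemma sum3 (A B C0 : finType) (f : A * B * C0 -> R) :
  \sum_t f t = \sum_a \sum_b \sum_c f ((a, b), c).
Proof.
rewrite pair_bigA /= pair_bigA /=.
by apply: eq_bigr => [[[a b] c]] _.
Qed.

Lemma sum_dd (A B C0 : finType) (x : A) (y : B) (F : A -> B -> C0 -> R) :
  \sum_a \sum_b \sum_c (a == x)%:R * (b == y)%:R * F a b c = \sum_c F x y c.
Proof.
under eq_bigr do under eq_bigr do rewrite -mulr_sumr -mulrA.
under eq_bigr do rewrite -mulr_sumr.
by rewrite sum_delta sum_delta.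
Qed.

Lemma sum_dd2 (A B C0 : finType) (x : A) (z : C0) (F : A -> B -> C0 -> R) :
  \sum_a \sum_b \sum_c (a == x)%:R * (c == z)%:R * F a b c = \sum_b F x b z.
Proof.
under eq_bigr do under eq_bigr do under eq_bigr do rewrite -mulrA.
under eq_bigr do under eq_bigr do rewrite -mulr_sumr sum_delta.
by under eq_bigr do rewrite -mulr_sumr; rewrite sum_delta.
Qed.

Lemma sum_dd3 (A B C0 : finType) (y : B) (z : C0) (F : A -> B -> C0 -> R) :
  \sum_a \sum_b \sum_c (b == y)%:R * (c == z)%:R * F a b c = \sum_a F a y z.
Proof.
apply: eq_bigr => a _.
under eq_bigr do under eq_bigr do rewrite -mulrA.
under eq_bigr do rewrite -mulr_sumr sum_delta.
by rewrite sum_delta.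
Qed.


Lemma sum_dd3' (A B C0 : finType) (y : B) (z : C0) (G : A -> B -> R) (H : A -> B -> C0 -> R) :
  \sum_a \sum_b \sum_c (b == y)%:R * (c == z)%:R * G a b * H a b c = \sum_a G a y * H a y z.
Proof.
rewrite -(sum_dd3 y z (fun a b c => G a b * H a b c)).
by apply: eq_bigr => a _; apply: eq_bigr => b _; apply: eq_bigr => c _; rewrite mulrA.
Qed.

Lemma sum_dd' (A B C0 : finType) (x : A) (y : B) (G : C0 -> R) (H : A -> B -> C0 -> R) :
  \sum_a \sum_b \sum_c (a == x)%:R * (b == y)%:R * G c * H a b c = \sum_c G c * H x y c.
Proof.
rewrite -(sum_dd x y (fun a b c => G c * H a b c)).
by apply: eq_bigr => a _; apply: eq_bigr => b _; apply: eq_bigr => c _; rewrite mulrA.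
Qed.

Variables (q : X -> Y -> R) (PX1 : X -> R) (W V : X -> Y -> R).

Definition Cc (i : (X * Y + X * Y)%type) (t : X * Y * Y) : R :=
  match i, t with
  | inl (x1, y), ((a, b), _) => (a == x1)%:R * (b == y)%:R
  | inr (x1, yh), ((a, _), c) => (a == x1)%:R * (c == yh)%:R
  end.
Definition cc (i : (X * Y + X * Y)%type) : R :=
  match i with inl (x1, y) => W x1 y | inr (x1, yh) => V x1 yh end.
Definition Dc (j : (X * Y + Y * X)%type) (t : X * Y * X) : R :=
  match j, t with
  | inl (x1, yh), ((a, b), _) => (a == x1)%:R * (b == yh)%:R
  | inr (yh, x), ((a, b), c) => (b == yh)%:R * (c == x)%:R * (PX1 a * V a b)
  end.
Definition dc (j : (X * Y + Y * X)%type) : R :=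
  match j with inl _ => 1 | inr (yh, x) => PX1 x * V x yh end.
Definition Mc (t : X * Y * Y) (k : X * Y * X) : R :=
  match t, k with
  | ((x1, y), yh), ((a, b), c) => (a == x1)%:R * (b == yh)%:R * (q c y * PX1 x1)
  end.

Definition flatP (P : X -> Y -> Y -> R) : X * Y * Y -> R := fun t => P t.1.1 t.1.2 t.2.
Definition flatK (K : X -> Y -> X -> R) : X * Y * X -> R := fun t => K t.1.1 t.1.2 t.2.
Definition curP (p : X * Y * Y -> R) : X -> Y -> Y -> R := fun x y yh => p ((x, y), yh).
Definition curK (p : X * Y * X -> R) : X -> Y -> X -> R := fun x y yh => p ((x, y), yh).

Lemma flat_curP p : flatP (curP p) = p.
Proof. by apply/funext => [[[a b] c]]. Qed.
Lemma flat_curK p : flatK (curK p) = p.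
Proof. by apply/funext => [[[a b] c]]. Qed.

Hypothesis HW : is_cond_pmf W.

Lemma setA_inA P : setA W V P <-> inA Cc cc (flatP P).
Proof.
split.
  move=> [H0 [HW' HV']]; split.
    by move=> [[a b] c]; rewrite /flatP /=; case: (H0 a) => ->.
  move=> [[x1 y]|[x1 yh]] /=; rewrite sum3 /=.
    by rewrite (sum_dd x1 y (fun a b c => P a b c)).
  by rewrite (sum_dd2 x1 yh (fun a b c => P a b c)).
move=> [H0 H1].
have HW' x1 y : \sum_yh P x1 y yh = W x1 y.
  by have := H1 (inl (x1, y)); rewrite sum3 /= (sum_dd x1 y (fun a b c => P a b c)).
have HV' x1 yh : \sum_y P x1 y yh = V x1 yh.
  by have := H1 (inr (x1, yh)); rewrite sum3 /= (sum_dd2 x1 yh (fun a b c => P a b c)).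
split; last by split.
move=> x; split; first by move=> y yh; exact: (H0 ((x, y), yh)).
by under eq_bigr do rewrite HW'; case: (HW x).
Qed.

Lemma setB_inB K : setB PX1 V K <-> inB Dc dc (flatK K).
Proof.
split.
  move=> [H0 H1]; split.
    by move=> [[a b] c]; rewrite /flatK /=; case: (H0 a b) => ->.
  move=> [[x1 yh]|[yh x]] /=; rewrite sum3 /=.
    by rewrite (sum_dd x1 yh (fun a b c => K a b c)); case: (H0 x1 yh).
  by rewrite (sum_dd3' yh x (fun a b => PX1 a * V a b) (fun a b c => K a b c)) -H1.
move=> [H0 H1]; split.
  move=> x1 yh; split; first by move=> x2; exact: (H0 ((x1, yh), x2)).
  by have := H1 (inl (x1, yh)); rewrite sum3 /= (sum_dd x1 yh (fun a b c => K a b c)).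
move=> yh x.
by have := H1 (inr (yh, x)); rewrite sum3 /= (sum_dd3' yh x (fun a b => PX1 a * V a b) (fun a b c => K a b c)).
Qed.


Lemma E_eq P K : expect_q q PX1 P K = Eg Mc (flatP P) (flatK K).
Proof.
rewrite /expect_q /Eg sum3; apply: eq_bigr => x1 _.
rewrite exchange_big; apply: eq_bigr => y _.
rewrite exchange_big; apply: eq_bigr => yh _.
rewrite sum3 /= (sum_dd' x1 yh (fun c => q c y * PX1 x1) (fun a b c => K a b c)).
rewrite mulr_sumr; apply: eq_bigr => x2 _; rewrite /flatP /=; ring.
Qed.

Hypothesis HV : is_cond_pmf V.

Lemma A0c : exists P, inA Cc cc P.
Proof.
exists (flatP (fun x y yh => W x y * V x yh)); apply/setA_inA; split; last split.
- move=> x; split; first by move=> y yh; apply: mulr_ge0; [case: (HW x) | case: (HV x)].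
  under eq_bigr do rewrite -mulr_sumr; case: (HV x) => _ ->.
  by under eq_bigr do rewrite mulr1; case: (HW x).
- by move=> x1 y; rewrite -mulr_sumr; case: (HV x1) => _ ->; rewrite mulr1.
- by move=> x1 yh; rewrite -mulr_suml; case: (HW x1) => _ ->; rewrite mul1r.
Qed.

Lemma B0c : exists K, inB Dc dc K.
Proof.
exists (flatK (fun x1 yh x2 => (x2 == x1)%:R)); apply/setB_inB; split.
  move=> x1 yh; split; first by move=> x2; rewrite ler0n.
  by rewrite -[RHS](sum_delta x1 (fun _ => 1 : R)); apply: eq_bigr => k _; rewrite mulr1.
by move=> yh x; rewrite sum_delta_r.
Qed.

Lemma bndAc (la : X * Y * Y -> R) : (forall t, 0 <= la t) ->
  (forall i, \sum_t Cc i t * la t = 0) -> forall t, la t = 0.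
Proof.
move=> H0 H [[a b] c].
have := H (inl (a, b)); rewrite sum3 /= (sum_dd a b (fun a b c => la ((a, b), c))).
by move/psumr_eq0P => ->.
Qed.

Lemma bndBc (rh : X * Y * X -> R) : (forall k, 0 <= rh k) ->
  (forall j, \sum_k Dc j k * rh k = 0) -> forall k, rh k = 0.
Proof.
move=> H0 H [[a b] c].
have := H (inl (a, b)); rewrite sum3 /= (sum_dd a b (fun a b c => rh ((a, b), c))).
by move/psumr_eq0P => ->.
Qed.

End Concrete.

Unset Implicit Arguments.

Theorem lemma1 (R : realType) (X Y : finType) (q : X -> Y -> R) (PX1 : X -> R)
  (W V : X -> Y -> R) :
  is_pmf PX1 -> is_cond_pmf W -> is_cond_pmf V ->
  let E := expect_q q PX1 in
  let A := setA W V in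
  let B := setB PX1 V in
  let minB := fun P => inf [set E P K | K in B] in
  let maxA := fun K => sup [set E P K | P in A] in
  (forall P, A P -> exists2 K, B K & forall K', B K' -> E P K <= E P K') /\
  (forall K, B K -> exists2 P, A P & forall P', A P' -> E P' K <= E P K) /\
  (exists2 P, A P & forall P', A P' -> minB P' <= minB P) /\
  (exists2 K, B K & forall K', B K' -> maxA K <= maxA K') /\
  sup [set minB P | P in A] = inf [set maxA K | K in B].
Proof.
move=> HP HW HV E A B.
have A0 : exists P, inA (@Cc R X Y) (cc W V) P by apply: A0c.
have B0 : exists K, inB (Dc PX1 V) (dc PX1 V) K by apply: B0c.
have bA : forall la, (forall t, 0 <= la t) ->
    (forall i, \sum_t @Cc R X Y i t * la t = 0) -> forall t, la t = 0 by apply: bndAc.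
have bB : forall rh, (forall k, 0 <= rh k) ->
    (forall j, \sum_k Dc PX1 V j k * rh k = 0) -> forall k, rh k = 0 by apply: bndBc.
apply: abs_minimax.
- have [p Hp [k Hk H]] := saddle (Mc q PX1) A0 B0 bA bB.
  exists (curP p); first by apply/(setA_inA _ HW); rewrite flat_curP.
  exists (curK k); first by apply/setB_inB; rewrite flat_curK.
  move=> P K HP' HK'; rewrite /E !E_eq flat_curP flat_curK.
  by apply: H; [apply/(setA_inA _ HW) | apply/setB_inB].
- move=> P HP'.
  have [k Hk H] := attain_min (Mc q PX1) B0 bB (flatP P).
  exists (curK k); first by apply/setB_inB; rewrite flat_curK.
  move=> K' HK'; rewrite /E !E_eq flat_curK; apply: H; exact/setB_inB.
- move=> K HK'.
  have [p Hp H] := attain_max (Mc q PX1) A0 bA (flatK K).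
  exists (curP p); first by apply/(setA_inA _ HW); rewrite flat_curP.
  move=> P' HP'; rewrite /E !E_eq flat_curP; apply: H; exact/(setA_inA _ HW).
Qed.
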